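(* Let $W$ be a normal PO-dilator, $X$ a partial order, and $(Z,\iota,\kappa)$ a Kruskal fixed point of $W$ over $X$. The following are equivalent: (i) $\operatorname{rng}(\iota)\cup\operatorname{rng}(\kappa)=Z$; for all $x,y\in X$, $x\leq_X y$ implies $\iota(x)\leq_Z\iota(y)$; and there is a function $h:Z\to\mathbb N$ such that $s\in\operatorname{supp}^W_Z(\sigma)$ implies $h(s)<h(\kappa(\sigma))$ for all $s\in Z$ and $\sigma\in W(Z)$. (ii) The Kruskal fixed point $(Z,\iota,\kappa)$ is initial.
   Context: A quasi embedding between partial orders $X,Y$ is a function $f$ with $f(x)\leq_Y f(y)\Rightarrow x\leq_X y$; an embedding also satisfies the converse. $\mathrm{PO}$ is the category of partial orders and quasi embeddings. $[X]^{<\omega}$ denotes the finite subsets of $X$, with $[f]^{<\omega}(a)=\{f(x)\mid x\in a\}$. A PO-dilator is a functor $W:\mathrm{PO}\to\mathrm{PO}$ mapping embeddings to embeddings, with a natural transformation $\operatorname{supp}^W:W\Rightarrow[\cdot]^{<\omega}$ such that for every embedding $f:X\to Y$, $\operatorname{rng}(W(f))=\{\sigma\in W(Y)\mid\operatorname{supp}^W_Y(\sigma)\subseteq\operatorname{rng}(f)\}$. For finite $a,b\subseteq X$, $a\leq^{\mathrm{fin}}_X b$ iff every $x\in a$ has some $y\in b$ with $x\leq_X y$ (for an element $z$, $z\leq^{\mathrm{fin}}_X b$ means $\{z\}\leq^{\mathrm{fin}}_X b$). $W$ is normal if $\sigma\leq_{W(X)}\tau$ implies $\operatorname{supp}^W_X(\sigma)\leq^{\mathrm{fin}}_X\operatorname{supp}^W_X(\tau)$.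 A Kruskal fixed point of a normal PO-dilator $W$ over a partial order $X$ is a partial order $Z$ with functions $\iota:X\to Z$ and $\kappa:W(Z)\to Z$ such that $\operatorname{rng}(\iota)\cap\operatorname{rng}(\kappa)=\emptyset$ and: $\iota(x)\leq_Z\iota(y)$ implies $x\leq_X y$; $\iota(x)\leq_Z\kappa(\tau)$ iff $\iota(x)\leq^{\mathrm{fin}}_Z\operatorname{supp}^W_Z(\tau)$; $\kappa(\sigma)\not\leq_Z\iota(y)$ for all $\sigma,y$; and $\kappa(\sigma)\leq_Z\kappa(\tau)$ iff ($\sigma\leq_{W(Z)}\tau$ or $\kappa(\sigma)\leq^{\mathrm{fin}}_Z\operatorname{supp}^W_Z(\tau)$), for all $x,y\in X$, $\sigma,\tau\in W(Z)$. Such a Kruskal fixed point $(Z,\iota,\kappa)$ is initial if for every Kruskal fixed point $(Z',\iota',\kappa')$ of $W$ over $X$ there is a unique quasi embedding $f:Z\to Z'$ with $f\circ\iota=\iota'$ and $f\circ\kappa=\kappa'\circ W(f)$. *)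

(* Defs.v *)
From Stdlib Require Import List Arith.
Import ListNotations.

Set Implicit Arguments.
Unset Strict Implicit.

Record PO : Type := MkPO {
  car :> Type;
  le : car -> car -> Prop;
  le_refl : forall x, le x x;
  le_antisym : forall x y, le x y -> le y x -> x = y;
  le_trans : forall x y z, le x y -> le y z -> le x z
}.
Arguments le {p} _ _.

Definition quasi_emb (X Y : PO) (f : X -> Y) : Prop :=
  forall x y : X, le (f x) (f y) -> le x y.

Definition embedding (X Y : PO) (f : X -> Y) : Prop :=
  forall x y : X, le (f x) (f y) <-> le x y.

(** Finite subsets are represented by lists (membership via [In]).
    a <=^fin b : every element of a lies below some element of b. *)
Definition fin_le (X : PO) (a b : list X) : Prop :=
  forall x, In x a -> exists y, In y b /\ le x y.

(** PO-dilators: endofunctors of the category PO of partial orders and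
    quasi embeddings that preserve embeddings, with a natural support
    transformation W => [.]^{<omega} satisfying the support condition. *)
Record PO_dilator : Type := MkDil {
  W_obj :> PO -> PO;
  W_map : forall (X Y : PO) (f : X -> Y), quasi_emb f -> W_obj X -> W_obj Y;
  W_map_qe : forall (X Y : PO) (f : X -> Y) (hf : quasi_emb f),
      quasi_emb (W_map hf);
  W_map_id : forall (X : PO) (h : quasi_emb (fun x : X => x)) (s : W_obj X),
      W_map h s = s;
  W_map_comp : forall (X Y Z : PO) (f : X -> Y) (g : Y -> Z)
      (hf : quasi_emb f) (hg : quasi_emb g)
      (hgf : quasi_emb (fun x => g (f x))) (s : W_obj X),
      W_map hgf s = W_map hg (W_map hf s);
  W_map_emb : forall (X Y : PO) (f : X -> Y) (hf : quasi_emb f),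
      embedding f -> embedding (W_map hf);
  supp : forall X : PO, W_obj X -> list X;
  supp_nat : forall (X Y : PO) (f : X -> Y) (hf : quasi_emb f) (s : W_obj X) (y : Y),
      In y (supp (W_map hf s)) <-> exists x, In x (supp s) /\ f x = y;
  supp_rng : forall (X Y : PO) (f : X -> Y) (hf : quasi_emb f), embedding f ->
      forall t : W_obj Y,
        (exists s, W_map hf s = t) <->
        (forall y, In y (supp t) -> exists x, f x = y)
}.
Arguments W_map {p X Y f} _ _.
Arguments supp {p X} _.

Definition normal (W : PO_dilator) : Prop :=
  forall (X : PO) (s t : W X), le s t -> fin_le (supp s) (supp t).

Definition is_KFP (W : PO_dilator) (X Z : PO) (iota : X -> Z) (kappa : W Z -> Z)
  : Prop :=
  (forall x s, iota x <> kappa s) /\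
  (forall x y, le (iota x) (iota y) -> le x y) /\
  (forall x t, le (iota x) (kappa t) <-> fin_le [iota x] (supp t)) /\
  (forall s y, ~ le (kappa s) (iota y)) /\
  (forall s t, le (kappa s) (kappa t) <->
               (le s t \/ fin_le [kappa s] (supp t))).
Arguments is_KFP : clear implicits.

(** Initiality: unique quasi embedding into any other Kruskal fixed point,
    commuting with iota and kappa (equality of functions = pointwise). *)
Definition is_initial_KFP (W : PO_dilator) (X Z : PO) (iota : X -> Z)
  (kappa : W Z -> Z) : Prop :=
  forall (Z' : PO) (iota' : X -> Z') (kappa' : W Z' -> Z'),
    is_KFP W X Z' iota' kappa' ->
    exists (f : Z -> Z') (hf : quasi_emb f),
      (forall x, f (iota x) = iota' x) /\
      (forall s, f (kappa s) = kappa' (W_map hf s)) /\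
      (forall (g : Z -> Z') (hg : quasi_emb g),
          (forall x, g (iota x) = iota' x) ->
          (forall s, g (kappa s) = kappa' (W_map hg s)) ->
          forall z, g z = f z).
Arguments is_initial_KFP : clear implicits.

(* Main.v *)
Require Import Defs.
From Stdlib Require Import List Arith Lia.
From Stdlib Require Import Classical ClassicalEpsilon FunctionalExtensionality ProofIrrelevance.
Import ListNotations.

Set Implicit Arguments.

Lemma qe_inj (A B : PO) (f : A -> B) : quasi_emb f -> forall a b, f a = f b -> a = b.
Proof. intros hf a b e. apply le_antisym; apply hf; rewrite e; apply le_refl. Qed.

Lemma W_map_ext (W : PO_dilator) (A B : PO) (f g : A -> B) (hf : quasi_emb f) (hg : quasi_emb g) :
  (forall a, f a = g a) -> forall s : W A, W_map hf s = W_map hg s.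
Proof.
  intros e. assert (f = g) by (apply functional_extensionality; auto). subst g.
  rewrite (proof_irrelevance _ hf hg). reflexivity.
Qed.

Lemma W_comp (W : PO_dilator) (A B C : PO) (f : A -> B) (g : B -> C)
  (hf : quasi_emb f) (hg : quasi_emb g) (k : A -> C) (hk : quasi_emb k) :
  (forall a, k a = g (f a)) -> forall s : W A, W_map hk s = W_map hg (W_map hf s).
Proof.
  intros e s. assert (hgf : quasi_emb (fun x => g (f x))) by (intros x y H; apply hf, hg, H).
  rewrite <- (W_map_comp hf hg hgf). apply W_map_ext; auto.
Qed.

Definition SubPO (A : PO) (P : A -> Prop) : PO.
Proof.
  refine (@MkPO {x : A | P x} (fun a b => le (proj1_sig a) (proj1_sig b)) _ _ _).
  - intros; apply le_refl.
  - intros [a pa] [b pb] h1 h2; simpl in *.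
    assert (a = b) by (apply le_antisym; auto). subst.
    f_equal; apply proof_irrelevance.
  - intros x y z h1 h2; eapply le_trans; eauto.
Defined.
Arguments SubPO {A} P.

Definition sv (A : PO) (P : A -> Prop) : SubPO P -> A := fun a => proj1_sig a.
Lemma sv_qe (A : PO) (P : A -> Prop) : quasi_emb (@sv A P).
Proof. intros a b h; exact h. Qed.
Lemma sv_emb (A : PO) (P : A -> Prop) : embedding (@sv A P).
Proof. intros a b; split; auto. Qed.

Lemma emb_qe (A B : PO) (f : A -> B) : embedding f -> quasi_emb f.
Proof. intros e a b; apply e. Qed.

Lemma W_supp_ext (W : PO_dilator) (A B : PO) (f g : A -> B) (hf : quasi_emb f) (hg : quasi_emb g)
  (s : W A) : (forall a, In a (supp s) -> f a = g a) -> W_map hf s = W_map hg s.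
Proof.
  intros e.
  set (P := fun a => In a (supp s)).
  assert (e0 : forall a : SubPO P, f (sv a) = g (sv a)) by (intros [a pa]; apply e; exact pa).
  destruct (proj2 (supp_rng (@sv_qe A P) (@sv_emb A P) s)) as [s0 Hs0].
  { intros y hy. exists (exist _ y hy). reflexivity. }
  rewrite <- Hs0.
  assert (hfi : quasi_emb (fun x => f (sv x))) by (intros x y H; apply (@sv_qe A P), hf, H).
  assert (hgi : quasi_emb (fun x => g (sv x))) by (intros x y H; apply (@sv_qe A P), hg, H).
  rewrite <- (W_comp W (@sv_qe A P) hf hfi (fun _ => eq_refl)).
  rewrite <- (W_comp W (@sv_qe A P) hg hgi (fun _ => eq_refl)).
  apply W_map_ext. intros a. apply e0.
Qed.

Lemma fin_le_one (A : PO) (a : A) (l : list A) : fin_le [a] l <-> exists y, In y l /\ le a y.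
Proof.
  split.
  - intros H. apply H. left; reflexivity.
  - intros [y [h1 h2]] x [<-|[]]. exists y; auto.
Qed.

Lemma fin_le_map (W : PO_dilator) (A B : PO) (f : A -> B) (hf : quasi_emb f) (a : A) (t : W A) :
  embedding f -> (fin_le [f a] (supp (W_map hf t)) <-> fin_le [a] (supp t)).
Proof.
  intros ef. rewrite !fin_le_one. split.
  - intros [y [hy hl]]. apply supp_nat in hy. destruct hy as [x [hx <-]].
    exists x; split; [exact hx| apply ef; exact hl].
  - intros [y [hy hl]]. exists (f y); split.
    + apply supp_nat. exists y; auto.
    + apply ef; auto.
Qed.

Lemma least_ex (P : nat -> Prop) : (exists n, P n) -> exists n, P n /\ forall m, P m -> n <= m.
Proof.
  intros [n Hn]. revert Hn. induction n as [n IH] using lt_wf_ind. intros Hn.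
  destruct (classic (exists m, m < n /\ P m)) as [[m [h1 h2]]|H].
  - apply (IH m h1 h2).
  - exists n; split; auto. intros m Hm. destruct (le_lt_dec n m); auto.
    exfalso; apply H; eauto.
Qed.

Unset Implicit Arguments.
Section Part1.
Variables (W : PO_dilator) (X Z : PO) (iota : X -> Z) (kappa : W Z -> Z).
Hypothesis HK : is_KFP W X Z iota kappa.
Hypothesis surj : forall z : Z, (exists x, iota x = z) \/ (exists s, kappa s = z).
Hypothesis mono : forall x y : X, le x y -> le (iota x) (iota y).
Variable h : Z -> nat.
Hypothesis hh : forall (s : Z) (sg : W Z), In s (supp sg) -> h s < h (kappa sg).

Lemma p1_disj x s : iota x <> kappa s.
Proof. apply HK. Qed.

Lemma p1_iota_inj x y : iota x = iota y -> x = y.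
Proof.
  intros e. destruct HK as [_ [H2 _]]. apply le_antisym; apply H2; rewrite e; apply le_refl.
Qed.

Lemma p1_supp_below s sg : In s (supp sg) -> le s (kappa sg).
Proof.
  intros Hin. destruct HK as [_ [_ [H3 [_ H5]]]].
  destruct (surj s) as [[x <-]|[r <-]].
  - apply H3. apply fin_le_one. exists (iota x); split; auto. apply le_refl.
  - apply H5. right. apply fin_le_one. exists (kappa r); split; auto. apply le_refl.
Qed.

Lemma p1_kappa_inj s t : kappa s = kappa t -> s = t.
Proof.
  destruct HK as [_ [_ [_ [_ H5]]]].
  assert (forall a b, kappa a = kappa b -> le a b).
  { intros a b e. assert (le (kappa a) (kappa b)) by (rewrite e; apply le_refl).
    apply H5 in H. destruct H as [H|H]; auto.
    apply fin_le_one in H. destruct H as [u [hu hl]].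
    exfalso. pose proof (p1_supp_below _ _ hu) as hb.
    assert (u = kappa b). { apply le_antisym; auto. rewrite <- e; auto. }
    pose proof (hh _ _ hu). rewrite H in H0. lia. }
  intros e. apply le_antisym; auto.
Qed.

Lemma W_map_qe_inj (A B : PO) (f : A -> B) (hf : quasi_emb f) (a b : W A) :
  W_map hf a = W_map hf b -> a = b.
Proof. apply qe_inj. apply W_map_qe. Qed.

Variables (Z' : PO) (iota' : X -> Z') (kappa' : W Z' -> Z').
Hypothesis HK' : is_KFP W X Z' iota' kappa'.

Definition SQ (n : nat) : PO := SubPO (fun z : Z => h z < n).
Definition iq (n : nat) : SQ n -> Z := @sv Z (fun z : Z => h z < n).
Lemma iq_qe n : quasi_emb (iq n).
Proof. intros a b H; exact H. Qed.
Lemma iq_emb n : embedding (iq n).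
Proof. intros a b; split; auto. Qed.

Definition Spec n (g : SQ n -> Z') (hg : quasi_emb g) : Prop :=
  (forall x (p : h (iota x) < n), g (exist _ (iota x) p) = iota' x) /\
  (forall s (p : h (kappa s) < n) (s' : W (SQ n)), W_map (iq_qe n) s' = s ->
      g (exist _ (kappa s) p) = kappa' (W_map hg s')).

Lemma p1_pre n (s : W Z) : h (kappa s) <= n -> exists s' : W (SQ n), W_map (iq_qe n) s' = s.
Proof.
  intros Hs. apply (supp_rng (iq_qe n) (iq_emb n)).
  intros y hy. pose proof (hh _ _ hy).
  exists (exist _ y (ltac:(lia) : h y < n)). reflexivity.
Qed.

Definition lift n m (Hnm : n <= m) : SQ n -> SQ m :=
  fun a => exist (fun z : Z => h z < m) (proj1_sig a) (Nat.lt_le_trans _ _ _ (proj2_sig a) Hnm).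
Lemma lift_qe n m Hnm : quasi_emb (@lift n m Hnm).
Proof. intros a b H; exact H. Qed.

Lemma Spec_uniq n g1 h1 g2 h2 : @Spec n g1 h1 -> @Spec n g2 h2 -> forall a, g1 a = g2 a.
Proof.
  intros [A1 B1] [A2 B2].
  assert (forall k (a : SQ n), h (proj1_sig a) < k -> g1 a = g2 a); [|intros a; eauto].
  induction k as [|k IH]; intros [z pz] Hk; simpl in Hk; [lia|].
  destruct (surj z) as [[x <-]|[s <-]].
  - rewrite A1, A2; reflexivity.
  - destruct (p1_pre n s ltac:(lia)) as [s' Hs'].
    rewrite (B1 s pz s' Hs'), (B2 s pz s' Hs'). f_equal.
    apply W_supp_ext. intros a Ha. apply IH.
    assert (In (iq n a) (supp s)) by (rewrite <- Hs'; apply supp_nat; eauto).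
    pose proof (hh _ _ H). simpl in Hk. unfold iq, sv in *. lia.
Qed.


Lemma Spec_restr n m (Hnm : n <= m) g hg (hq : quasi_emb (fun a => g (lift n m Hnm a))) :
  Spec m g hg -> Spec n (fun a => g (lift n m Hnm a)) hq.
Proof.
  intros [Am Bm]. split.
  - intros x p. unfold lift; simpl. apply Am.
  - intros s p s' Hs'. unfold lift; simpl.
    rewrite (Bm s _ (W_map (lift_qe n m Hnm) s')).
    + f_equal. symmetry. apply (W_comp W (lift_qe n m Hnm) hg hq). reflexivity.
    + rewrite <- Hs'. symmetry. apply (W_comp W (lift_qe n m Hnm) (iq_qe m) (iq_qe n)). reflexivity.
Qed.

Section Step.
Variable n : nat.
Variable g : SQ n -> Z'.
Variable hg : quasi_emb g.
Hypothesis Hg : Spec n g hg.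

Lemma exval (z : Z) (p : h z < S n) : exists y : Z',
  (forall x, z = iota x -> y = iota' x) /\
  (forall s s', z = kappa s -> W_map (iq_qe n) s' = s -> y = kappa' (W_map hg s')).
Proof.
  destruct (surj z) as [[x <-]|[s <-]].
  - exists (iota' x); split.
    + intros x' e. apply p1_iota_inj in e. subst; auto.
    + intros s s' e. exfalso; eapply p1_disj; eauto.
  - destruct (p1_pre n s ltac:(lia)) as [s0 Hs0].
    exists (kappa' (W_map hg s0)); split.
    + intros x e. exfalso; eapply p1_disj; eauto.
    + intros s1 s' e Hs'. apply p1_kappa_inj in e. subst s1.
      rewrite <- Hs' in Hs0. apply W_map_qe_inj in Hs0. subst; auto.
Qed.

Definition Gz (z : Z) (p : h z < S n) : Z' :=
  proj1_sig (constructive_indefinite_description _ (exval z p)).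
Definition G (a : SQ (S n)) : Z' := Gz (proj1_sig a) (proj2_sig a).
Definition lS : SQ n -> SQ (S n) := lift n (S n) (Nat.le_succ_diag_r n).

Lemma Gz_iota x p : Gz (iota x) p = iota' x.
Proof.
  unfold Gz. destruct (constructive_indefinite_description _ _) as [y [H1 H2]]. simpl. apply H1; auto.
Qed.
Lemma Gz_kappa s p s' : W_map (iq_qe n) s' = s -> Gz (kappa s) p = kappa' (W_map hg s').
Proof.
  intros e. unfold Gz. destruct (constructive_indefinite_description _ _) as [y [H1 H2]]. simpl.
  apply (H2 s); auto.
Qed.
Lemma G_agree (a : SQ n) : G (lS a) = g a.
Proof.
  destruct a as [z pz]. unfold G, lS, lift; simpl.
  destruct (surj z) as [[x <-]|[s <-]].
  - rewrite Gz_iota. symmetry; apply (proj1 Hg).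
  - destruct (p1_pre n s ltac:(lia)) as [s' Hs']. rewrite (Gz_kappa _ _ s' Hs').
    symmetry. apply (proj2 Hg); auto.
Qed.

Lemma In_iq (a : SQ n) (s0 : W (SQ n)) (s : W Z) : W_map (iq_qe n) s0 = s -> In a (supp s0) -> In (proj1_sig a) (supp s).
Proof. intros e H. rewrite <- e. apply supp_nat. exists a; split; auto. Qed.

Lemma G_qe_aux k : forall za zb (pa : h za < S n) (pb : h zb < S n),
  h za + h zb < k -> le (Gz za pa) (Gz zb pb) -> le za zb.
Proof.
  destruct HK' as [D1 [D2 [D3 [D4 D5]]]].
  destruct HK as [E1 [E2 [E3 [E4 E5]]]].
  induction k as [|k IH]; intros za zb pa pb Hk H; [lia|].
  destruct (surj za) as [[x <-]|[s <-]]; destruct (surj zb) as [[y <-]|[t <-]].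
  - rewrite !Gz_iota in H. apply mono, D2, H.
  - destruct (p1_pre n t ltac:(lia)) as [t0 Ht0].
    rewrite Gz_iota, (Gz_kappa _ _ t0 Ht0) in H. apply D3 in H. apply fin_le_one in H.
    destruct H as [y [hy hl]]. apply supp_nat in hy. destruct hy as [a [ha <-]].
    rewrite <- (G_agree a) in hl. rewrite <- (Gz_iota x pa) in hl.
    pose proof (In_iq a t0 t Ht0 ha) as Ha. pose proof (hh _ _ Ha).
    apply (IH (iota x) (proj1_sig (lS a)) pa (proj2_sig (lS a))) in hl; [|simpl; lia].
    apply E3, fin_le_one. exists (proj1_sig a); split; auto.
  - destruct (p1_pre n s ltac:(lia)) as [s0 Hs0].
    rewrite Gz_iota, (Gz_kappa _ _ s0 Hs0) in H. exfalso; eapply D4; eauto.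
  - destruct (p1_pre n s ltac:(lia)) as [s0 Hs0].
    destruct (p1_pre n t ltac:(lia)) as [t0 Ht0].
    pose proof H as H'.
    rewrite (Gz_kappa _ _ s0 Hs0), (Gz_kappa _ _ t0 Ht0) in H. apply D5 in H. destruct H as [H|H].
    + apply W_map_qe in H.
      apply (proj2 (W_map_emb (iq_qe n) (iq_emb n) s0 t0)) in H. rewrite Hs0, Ht0 in H.
      apply E5. left; auto.
    + apply fin_le_one in H.
      destruct H as [y [hy hl]]. apply supp_nat in hy. destruct hy as [a [ha <-]].
      rewrite <- (G_agree a) in hl. rewrite <- (Gz_kappa s pa s0 Hs0) in hl.
      pose proof (In_iq a t0 t Ht0 ha) as Ha. pose proof (hh _ _ Ha).
      apply (IH (kappa s) (proj1_sig (lS a)) pa (proj2_sig (lS a))) in hl; [|simpl; lia].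
      apply E5. right. apply fin_le_one. exists (proj1_sig a); split; auto.
Qed.

Lemma G_qe : quasi_emb G.
Proof.
  intros [za pa] [zb pb] H. unfold G in H; simpl in H.
  exact (G_qe_aux (S (h za + h zb)) za zb pa pb ltac:(lia) H).
Qed.

Lemma G_spec : Spec (S n) G G_qe.
Proof.
  split.
  - intros x p. unfold G; simpl. apply Gz_iota.
  - intros s p s1 Hs1. unfold G; simpl.
    destruct (p1_pre n s ltac:(lia)) as [s0 Hs0].
    rewrite (Gz_kappa _ _ s0 Hs0). f_equal.
    assert (e : s1 = W_map (lift_qe n (S n) (Nat.le_succ_diag_r n)) s0).
    { apply (W_map_qe_inj _ _ _ (iq_qe (S n))). rewrite Hs1, <- Hs0.
      apply (W_comp W (lift_qe n (S n) (Nat.le_succ_diag_r n)) (iq_qe (S n)) (iq_qe n)).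
      reflexivity. }
    subst s1. apply (W_comp W (lift_qe n (S n) (Nat.le_succ_diag_r n)) G_qe hg).
    intros a. symmetry. apply G_agree.
Qed.
End Step.

Lemma Spec_ex n : exists g hg, Spec n g hg.
Proof.
  induction n as [|n IH].
  - assert (g0 : SQ 0 -> Z') by (intros [z pz]; exfalso; lia).
    assert (hg0 : quasi_emb g0) by (intros [z pz]; lia).
    exists g0, hg0. split; intros; lia.
  - destruct IH as [g [hg Hg]]. exists (G n g hg), (G_qe n g hg Hg). apply G_spec.
Qed.

Definition gsel n := constructive_indefinite_description _ (Spec_ex n).
Definition fF (z : Z) : Z' := proj1_sig (gsel (S (h z))) (exist _ z (Nat.lt_succ_diag_r (h z))).
Lemma gsel_spec n : exists hg, Spec n (proj1_sig (gsel n)) hg.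
Proof. exact (proj2_sig (gsel n)). Qed.

Lemma fF_agree n (a : SQ n) : fF (proj1_sig a) = proj1_sig (gsel n) a.
Proof.
  destruct a as [z pz]. simpl. unfold fF.
  assert (Hk : S (h z) <= n) by lia.
  destruct (gsel_spec (S (h z))) as [h1 H1]. destruct (gsel_spec n) as [h2 H2].
  assert (hq : quasi_emb (fun a => proj1_sig (gsel n) (lift _ _ Hk a))) by (intros a b H; exact (h2 _ _ H)).
  pose proof (Spec_restr _ _ Hk _ _ hq H2) as H3.
  rewrite (Spec_uniq _ _ _ _ _ H1 H3). unfold lift; simpl. f_equal. f_equal. apply proof_irrelevance.
Qed.

Lemma fF_qe : quasi_emb fF.
Proof.
  intros a b H.
  set (n := S (max (h a) (h b))).
  assert (pa : h a < n) by (unfold n; lia). assert (pb : h b < n) by (unfold n; lia).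
  change (le (fF (proj1_sig (exist (fun z => h z < n) a pa))) (fF (proj1_sig (exist (fun z => h z < n) b pb)))) in H.
  rewrite !fF_agree in H. destruct (gsel_spec n) as [hn Hn]. exact (hn _ _ H).
Qed.

Lemma fF_iota x : fF (iota x) = iota' x.
Proof. unfold fF. destruct (gsel_spec (S (h (iota x)))) as [h1 [A1 _]]. apply A1. Qed.

Lemma fF_kappa s : fF (kappa s) = kappa' (W_map fF_qe s).
Proof.
  destruct (p1_pre (S (h (kappa s))) s ltac:(lia)) as [s0 Hs0].
  unfold fF at 1. destruct (gsel_spec (S (h (kappa s)))) as [h1 [_ B1]].
  rewrite (B1 s _ s0 Hs0). f_equal.
  transitivity (W_map fF_qe (W_map (iq_qe _) s0)); [|rewrite Hs0; reflexivity].
  apply (W_comp W (iq_qe _) fF_qe h1). intros a. symmetry. apply fF_agree.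
Qed.

Lemma part1_main : exists (f : Z -> Z') (hf : quasi_emb f),
      (forall x, f (iota x) = iota' x) /\
      (forall s, f (kappa s) = kappa' (W_map hf s)) /\
      (forall (g : Z -> Z') (hg : quasi_emb g),
          (forall x, g (iota x) = iota' x) ->
          (forall s, g (kappa s) = kappa' (W_map hg s)) ->
          forall z, g z = f z).
Proof.
  exists fF, fF_qe. split; [exact fF_iota|]. split; [exact fF_kappa|].
  intros g hg Hi Hk.
  assert (forall k z, h z < k -> g z = fF z); [|intros z; eauto].
  induction k as [|k IH]; intros z Hz; [lia|].
  destruct (surj z) as [[x <-]|[s <-]].
  - rewrite Hi, fF_iota; reflexivity.
  - rewrite Hk, fF_kappa. f_equal. apply W_supp_ext. intros a Ha. apply IH.
    pose proof (hh a s Ha). lia.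
Qed.
End Part1.

Lemma part1 (W : PO_dilator) (X Z : PO) (iota : X -> Z) (kappa : W Z -> Z) :
  is_KFP W X Z iota kappa ->
  (forall z : Z, (exists x, iota x = z) \/ (exists s, kappa s = z)) ->
  (forall x y : X, le x y -> le (iota x) (iota y)) ->
  (exists h : Z -> nat, forall (s : Z) (sg : W Z), In s (supp sg) -> h s < h (kappa sg)) ->
  is_initial_KFP W X Z iota kappa.
Proof.
  intros HK surj mono [h hh] Z' iota' kappa' HK'.
  exact (part1_main W X Z iota kappa HK surj mono h hh Z' iota' kappa' HK').
Qed.

Section Part2A.
Variables (W : PO_dilator) (X Z : PO) (iota : X -> Z) (kappa : W Z -> Z).
Hypothesis hW : normal W.
Hypothesis HK : is_KFP W X Z iota kappa.
Hypothesis HI : is_initial_KFP W X Z iota kappa.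

Fixpoint Gen (n : nat) (z : Z) : Prop :=
  match n with
  | 0 => False
  | S m => (exists x, z = iota x) \/ (exists s, z = kappa s /\ forall t, In t (supp s) -> Gen m t)
  end.

Lemma Gen_S n z : Gen n z -> Gen (S n) z.
Proof.
  revert z; induction n as [|n IH]; intros z H; [destruct H|].
  destruct H as [H|[s [e H]]]; [left; auto|right; exists s; split; auto].
Qed.

Lemma Gen_le n m z : n <= m -> Gen n z -> Gen m z.
Proof. intros Hle; induction Hle; auto using Gen_S. Qed.

Lemma Gen_list (l : list Z) : (forall t, In t l -> exists n, Gen n t) -> exists N, forall t, In t l -> Gen N t.
Proof.
  induction l as [|a l IH]; intros H.
  - exists 0; intros t [].
  - destruct (H a (or_introl eq_refl)) as [na Ha].
    destruct IH as [N HN]; [intros t Ht; apply H; right; auto|].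
    exists (max na N). intros t [<-|Ht].
    + apply (Gen_le na); [lia|auto].
    + apply (Gen_le N); [lia|auto].
Qed.

Definition GA (z : Z) : Prop := exists n, Gen n z.
Definition SG : PO := SubPO GA.
Definition jG : SG -> Z := @sv Z GA.
Lemma jG_qe : quasi_emb jG.
Proof. intros a b H; exact H. Qed.
Lemma jG_emb : embedding jG.
Proof. intros a b; split; auto. Qed.

Lemma GA_iota x : GA (iota x).
Proof. exists 1. left; eauto. Qed.
Lemma GA_kappa (s : W SG) : GA (kappa (W_map jG_qe s)).
Proof.
  destruct (Gen_list (supp (W_map jG_qe s))) as [N HN].
  { intros t Ht. apply supp_nat in Ht. destruct Ht as [[z pz] [_ <-]]. exact pz. }
  exists (S N). right. exists (W_map jG_qe s). split; auto.
Qed.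

Definition iG (x : X) : SG := exist _ (iota x) (GA_iota x).
Definition kG (s : W SG) : SG := exist _ (kappa (W_map jG_qe s)) (GA_kappa s).

Lemma KFP_SG : is_KFP W X SG iG kG.
Proof.
  destruct HK as [E1 [E2 [E3 [E4 E5]]]].
  split; [|split; [|split; [|split]]].
  - intros x s e. apply (f_equal (@proj1_sig _ _)) in e. simpl in e. eapply E1; eauto.
  - intros x y H. apply E2. exact H.
  - intros x t. change (le (jG (iG x)) (kappa (W_map jG_qe t)) <-> fin_le [iG x] (supp t)).
    rewrite <- (fin_le_map W jG_qe (iG x) t jG_emb). apply E3.
  - intros s y H. eapply E4. exact H.
  - intros s t. change (le (jG (kG s)) (kappa (W_map jG_qe t)) <-> le s t \/ fin_le [kG s] (supp t)).
    rewrite <- (fin_le_map W jG_qe (kG s) t jG_emb).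
    rewrite <- (W_map_emb jG_qe jG_emb s t). apply E5.
Qed.

Lemma all_GA z : GA z.
Proof.
  destruct (HI SG iG kG KFP_SG) as [f [hf [Hi [Hk _]]]].
  destruct (HI Z iota kappa HK) as [f0 [hf0 [_ [_ U]]]].
  set (g := fun z => jG (f z)).
  assert (hg : quasi_emb g) by (intros a b H; apply hf, jG_qe, H).
  assert (hid : quasi_emb (fun z : Z => z)) by (intros a b H; exact H).
  assert (e1 : g z = f0 z).
  { apply (U g hg).
    - intros x. unfold g. rewrite Hi. reflexivity.
    - intros s. unfold g. rewrite Hk. simpl. f_equal. symmetry.
      apply (W_comp W hf jG_qe hg). reflexivity. }
  assert (e2 : z = f0 z).
  { apply (U (fun z => z) hid).
    - reflexivity.
    - intros s. f_equal. symmetry. apply W_map_id. }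
  rewrite e2, <- e1. unfold g. exact (proj2_sig (f z)).
Qed.

Lemma p2_surj z : (exists x, iota x = z) \/ (exists s, kappa s = z).
Proof.
  destruct (all_GA z) as [[|n] H]; [destruct H|].
  destruct H as [[x ->]|[s [-> _]]]; [left|right]; eauto.
Qed.

Lemma p2_supp_below s sg : In s (supp sg) -> le s (kappa sg).
Proof.
  intros Hin. destruct HK as [_ [_ [H3 [_ H5]]]].
  destruct (p2_surj s) as [[x <-]|[r <-]].
  - apply H3. apply fin_le_one. exists (iota x); split; auto. apply le_refl.
  - apply H5. right. apply fin_le_one. exists (kappa r); split; auto. apply le_refl.
Qed.

Lemma p2_noself n : forall z, Gen n z -> forall t, kappa t = z -> ~ In z (supp t).
Proof.
  destruct HK as [E1 [E2 [E3 [E4 E5]]]].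
  induction n as [|n IH]; intros z Hz t et Hin; [destruct Hz|].
  destruct Hz as [[x ->]|[s [-> Hs]]]; [eapply E1; eauto|].
  assert (Hs2 : In (kappa s) (supp s)).
  { assert (le (kappa t) (kappa s)) by (rewrite et; apply le_refl).
    apply E5 in H. destruct H as [H|H].
    - pose proof (hW _ _ _ H (kappa s) Hin) as [u [hu hl]].
      assert (u = kappa s) by (apply le_antisym; auto using p2_supp_below). subst; auto.
    - apply fin_le_one in H. destruct H as [u [hu hl]]. rewrite et in hl.
      assert (u = kappa s) by (apply le_antisym; auto using p2_supp_below). subst; auto. }
  exact (IH (kappa s) (Hs _ Hs2) s eq_refl Hs2).
Qed.

Lemma p2_kappa_inj s t : kappa s = kappa t -> s = t.
Proof.
  destruct HK as [_ [_ [_ [_ H5]]]].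
  assert (forall a b, kappa a = kappa b -> le a b).
  { intros a b e. assert (le (kappa a) (kappa b)) by (rewrite e; apply le_refl).
    apply H5 in H. destruct H as [H|H]; auto.
    apply fin_le_one in H. destruct H as [u [hu hl]].
    exfalso. pose proof (p2_supp_below _ _ hu) as hb.
    assert (u = kappa b). { apply le_antisym; auto. rewrite <- e; auto. }
    subst u. destruct (all_GA (kappa b)) as [n Hn].
    exact (p2_noself n _ Hn b eq_refl hu). }
  intros e. apply le_antisym; auto.
Qed.

Lemma p2_least z : exists n, Gen n z /\ forall m, Gen m z -> n <= m.
Proof. apply least_ex. apply all_GA. Qed.

Definition hG (z : Z) : nat := proj1_sig (constructive_indefinite_description _ (p2_least z)).

Lemma hG_spec z : Gen (hG z) z /\ forall m, Gen m z -> hG z <= m.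
Proof. unfold hG. destruct (constructive_indefinite_description _ _) as [n Hn]. exact Hn. Qed.

Lemma p2_height s sg : In s (supp sg) -> hG s < hG (kappa sg).
Proof.
  intros Hin. destruct (hG_spec (kappa sg)) as [H1 _].
  destruct (hG (kappa sg)) as [|m] eqn:E; [destruct H1|].
  destruct H1 as [[x ex]|[t [et Ht]]].
  - exfalso. destruct HK as [E1 _]. eapply E1; eauto.
  - apply p2_kappa_inj in et. subst t. apply Ht in Hin.
    pose proof (proj2 (hG_spec s) m Hin). lia.
Qed.
End Part2A.

Section Part2C.
Variables (W : PO_dilator) (X Z : PO) (iota : X -> Z) (kappa : W Z -> Z).
Hypothesis hW : normal W.
Hypothesis HK : is_KFP W X Z iota kappa.
Hypothesis kinj : forall s t, kappa s = kappa t -> s = t.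
Variable h : Z -> nat.
Hypothesis hh : forall (s : Z) (sg : W Z), In s (supp sg) -> h s < h (kappa sg).

Record St := mkSt { sP : Z -> Prop; sL : Z -> Z -> Prop }.

Definition good (s : St) : Prop :=
  (forall a, sP s a -> sL s a a) /\
  (forall a b, sP s a -> sP s b -> sL s a b -> sL s b a -> a = b) /\
  (forall a b c, sP s a -> sP s b -> sP s c -> sL s a b -> sL s b c -> sL s a c) /\
  (forall a b, sP s a -> sP s b -> le a b -> sL s a b).

Definition SPO (s : St) : PO.
Proof.
  refine (@MkPO {z : Z | sP s z}
    (fun a b => (good s /\ sL s (proj1_sig a) (proj1_sig b)) \/ (~ good s /\ le (proj1_sig a) (proj1_sig b))) _ _ _).
  - intros a. destruct (classic (good s)) as [G|G].
    + left; split; auto. destruct G as [Gr _]. apply Gr, proj2_sig.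
    + right; split; auto. apply le_refl.
  - intros [a pa] [b pb] h1 h2; simpl in *.
    assert (a = b).
    { destruct h1 as [[G h1]|[G h1]]; destruct h2 as [[G' h2]|[G' h2]]; try contradiction.
      - destruct G as [_ [Ga _]]. apply Ga; auto.
      - apply le_antisym; auto. }
    subst; f_equal; apply proof_irrelevance.
  - intros a b c h1 h2.
    destruct h1 as [[G h1]|[G h1]]; destruct h2 as [[G' h2]|[G' h2]]; try contradiction.
    + left; split; auto. destruct G as [_ [_ [Gt _]]].
      exact (Gt _ _ _ (proj2_sig a) (proj2_sig b) (proj2_sig c) h1 h2).
    + right; split; auto; eapply le_trans; eauto.
Defined.

Definition jS (s : St) : SPO s -> Z := fun a => proj1_sig a.
Lemma jS_qe (s : St) : quasi_emb (jS s).
Proof.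
  intros a b H. destruct (classic (good s)) as [G|G].
  - left; split; auto. destruct G as [_ [_ [_ Gl]]]. exact (Gl _ _ (proj2_sig a) (proj2_sig b) H).
  - right; split; auto.
Qed.

Lemma jS_P (s : St) (a : SPO s) : sP s (jS s a).
Proof. exact (proj2_sig a). Qed.

Lemma SPO_le (s : St) : good s -> forall a b : SPO s, le a b <-> sL s (jS s a) (jS s b).
Proof.
  intros G a b. split.
  - intros [[_ H]|[G' _]]; [exact H|contradiction].
  - intros H; left; split; auto.
Qed.

Definition K (s : St) (sg : W (SPO s)) : Z := kappa (W_map (jS_qe s) sg).

Lemma K_inj s a b : K s a = K s b -> a = b.
Proof. intros e. apply kinj in e. apply (qe_inj (W_map_qe (hf := jS_qe s))) in e. exact e. Qed.

Lemma K_iota s a x : K s a <> iota x.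
Proof. intros e. destruct HK as [E1 _]. eapply E1; symmetry; eauto. Qed.

Definition stepP (s : St) (z : Z) : Prop :=
  (exists x, z = iota x) \/ (exists sg : W (SPO s), z = K s sg).
Definition stepL (s : St) (a b : Z) : Prop :=
  stepP s a /\ stepP s b /\
  ((exists x y, a = iota x /\ b = iota y /\ le x y) \/
   (exists sg tg, a = K s sg /\ b = K s tg /\ le sg tg) \/
   (exists tg, b = K s tg /\ exists t, In t (supp tg) /\ sL s a (jS s t))).
Definition step (s : St) : St := mkSt (stepP s) (stepL s).

Fixpoint stg (n : nat) : St :=
  match n with
  | 0 => mkSt (fun _ => False) (fun _ _ => False)
  | S m => step (stg m)
  end.

Lemma stepP_iota s x : stepP s (iota x).
Proof. left; eauto. Qed.
Lemma stepP_K s a : stepP s (K s a).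
Proof. right; eauto. Qed.

Lemma stepL_ii s x y : stepL s (iota x) (iota y) <-> le x y.
Proof.
  split.
  - intros [_ [_ [[x' [y' [e1 [e2 H]]]]|[[a [b [e1 _]]]|[tg [e _]]]]]].
    + destruct HK as [_ [E2 _]].
      assert (x = x') by (apply le_antisym; apply E2; rewrite e1; apply le_refl).
      assert (y = y') by (apply le_antisym; apply E2; rewrite e2; apply le_refl).
      subst; auto.
    + exfalso; eapply K_iota; eauto.
    + exfalso; eapply K_iota; eauto.
  - intros H. split; [apply stepP_iota|split; [apply stepP_iota|]]. left; eauto.
Qed.

Lemma stepL_to_iota s a y : stepL s a (iota y) -> exists x, a = iota x.
Proof.
  intros [_ [_ [[x' [y' [e1 _]]]|[[a' [b [_ [e _]]]]|[tg [e _]]]]]]; eauto;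
  exfalso; eapply K_iota; eauto.
Qed.

Lemma stepL_iK s x tg : stepL s (iota x) (K s tg) <-> exists t, In t (supp tg) /\ sL s (iota x) (jS s t).
Proof.
  split.
  - intros [_ [_ [[x' [y' [_ [e _]]]]|[[a' [b [e _]]]|[tg' [e H]]]]]].
    + exfalso; eapply K_iota; eauto.
    + exfalso; eapply K_iota; eauto.
    + apply K_inj in e; subst; auto.
  - intros H. split; [apply stepP_iota|split; [apply stepP_K|]]. right; right; eauto.
Qed.

Lemma stepL_KK s sg tg : stepL s (K s sg) (K s tg) <->
  le sg tg \/ exists t, In t (supp tg) /\ sL s (K s sg) (jS s t).
Proof.
  split.
  - intros [_ [_ [[x' [y' [e _]]]|[[a' [b [e1 [e2 H]]]]|[tg' [e H]]]]]].
    + exfalso; eapply K_iota; eauto.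
    + apply K_inj in e1; apply K_inj in e2; subst; auto.
    + apply K_inj in e; subst; auto.
  - intros H. split; [apply stepP_K|split; [apply stepP_K|]]. destruct H as [H|H].
    + right; left; eauto.
    + right; right; eauto.
Qed.

Lemma stepL_P s a b : stepL s a b -> stepP s a /\ stepP s b.
Proof. intros [H1 [H2 _]]; auto. Qed.

Record Hyp (s0 : St) : Prop := {
  H_good : good s0;
  H_mono : forall z, sP s0 z -> stepP s0 z;
  H_comp : forall a b, sP s0 a -> sP s0 b -> (stepL s0 a b <-> sL s0 a b);
  H_down : forall a b, stepL s0 a b -> sP s0 b -> sP s0 a;
  H_downZ : forall a b, stepP s0 a -> le a b -> sP s0 b -> sP s0 a;
  H_LP : forall a b, sL s0 a b -> sP s0 a /\ sP s0 b;
  H_ip : forall z x, sP s0 z -> sP s0 (iota x);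
  H_ii : forall x y, sP s0 (iota x) -> sP s0 (iota y) -> le x y -> sL s0 (iota x) (iota y) }.

Section StepHyp.
Variable s0 : St.
Hypothesis HH : Hyp s0.

Lemma L1P a b : stepL s0 a b -> stepP s0 a /\ stepP s0 b.
Proof. intros [H1 [H2 _]]; auto. Qed.

Lemma LtoL1 a b : sL s0 a b -> stepL s0 a b.
Proof. intros H. destruct (H_LP _ HH _ _ H). apply (H_comp _ HH); auto. Qed.

Lemma supp_below0 (tg : W (SPO s0)) t : In t (supp tg) -> stepL s0 (jS s0 t) (K s0 tg).
Proof.
  intros Hin. destruct (H_good _ HH) as [Gr _].
  split; [apply (H_mono _ HH), jS_P|split; [apply stepP_K|]].
  right; right. exists tg; split; auto. exists t; split; auto. apply Gr, jS_P.
Qed.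

Lemma L0_supp_below (tg : W (SPO s0)) t : In t (supp tg) -> sP s0 (K s0 tg) -> sL s0 (jS s0 t) (K s0 tg).
Proof.
  intros Hin HP. apply (H_comp _ HH); auto. apply jS_P. apply supp_below0; auto.
Qed.

Lemma normal_SPO (sg tg : W (SPO s0)) s : le sg tg -> In s (supp sg) ->
  exists t, In t (supp tg) /\ sL s0 (jS s0 s) (jS s0 t).
Proof.
  intros H Hin. destruct (hW _ _ _ H s Hin) as [t [ht hl]]. exists t; split; auto.
  apply (SPO_le _ (H_good _ HH)); auto.
Qed.

Lemma good1 : good (step s0).
Proof.
  destruct (H_good _ HH) as [Gr [Ga [Gt Gl]]].
  destruct HK as [E1 [E2 [E3 [E4 E5]]]].
  simpl. split; [|split; [|split]].
  -
    intros a [[x ->]|[sg ->]].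
    + apply stepL_ii, le_refl.
    + apply stepL_KK. left; apply le_refl.
  -
    assert (AP : forall a b, stepL s0 a b -> stepL s0 b a -> sP s0 a -> a = b).
    { intros a b H1 H2 Pa. assert (Pb : sP s0 b) by (eapply (H_down _ HH); eauto).
      apply Ga; auto; apply (H_comp _ HH); auto. }
    intros a b Pa Pb H1 H2.
    destruct Pa as [[x ->]|[sg ->]]; destruct Pb as [[y ->]|[tg ->]].
    + apply stepL_ii in H1; apply stepL_ii in H2. f_equal; apply le_antisym; auto.
    + apply stepL_to_iota in H2. destruct H2 as [x' e]. exfalso; eapply K_iota; eauto.
    + apply stepL_to_iota in H1. destruct H1 as [x' e]. exfalso; eapply K_iota; eauto.
    + pose proof H1 as H1'; pose proof H2 as H2'.
      apply stepL_KK in H1; apply stepL_KK in H2.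
      destruct H1 as [H1|[t [ht hl]]].
      * destruct H2 as [H2|[t [ht hl]]].
        -- f_equal; apply le_antisym; auto.
        -- symmetry; apply AP; auto. apply (H_LP _ HH _ _ hl).
      * apply AP; auto. apply (H_LP _ HH _ _ hl).
  -
    intros a b c Pa Pb Pc H1 H2.
    destruct Pb as [[y ->]|[rg ->]].
    + destruct (stepL_to_iota _ _ _ H1) as [x ->].
      apply stepL_ii in H1.
      destruct Pc as [[z ->]|[tg ->]].
      * apply stepL_ii in H2. apply stepL_ii. eapply le_trans; eauto.
      * apply stepL_iK in H2. destruct H2 as [t [ht hl]].
        apply stepL_iK. exists t; split; auto.
        destruct (H_LP _ HH _ _ hl) as [Py Pt].
        assert (Px : sP s0 (iota x)) by (eapply (H_ip _ HH); eauto).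
        apply (Gt _ (iota y) _ Px Py Pt); [apply (H_ii _ HH); auto | exact hl].
    + destruct Pc as [[z ->]|[tg ->]].
      { destruct (stepL_to_iota _ _ _ H2) as [x' e]. exfalso; eapply K_iota; eauto. }
      apply stepL_KK in H2.
      destruct Pa as [[x ->]|[sg ->]].
      * apply stepL_iK in H1. destruct H1 as [s [hs hl]].
        apply stepL_iK.
        destruct H2 as [H2|[t [ht hl2]]].
        -- destruct (normal_SPO _ _ _ H2 hs) as [t [ht hl2]].
           exists t; split; auto.
           destruct (H_LP _ HH _ _ hl) as [Px Ps]. destruct (H_LP _ HH _ _ hl2) as [_ Pt].
           exact (Gt _ _ _ Px Ps Pt hl hl2).
        -- exists t; split; auto.
           destruct (H_LP _ HH _ _ hl) as [Px Ps]. destruct (H_LP _ HH _ _ hl2) as [Pr Pt].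
           pose proof (L0_supp_below _ _ hs Pr) as Hb.
           exact (Gt _ _ _ Px Ps Pt hl (Gt _ _ _ Ps Pr Pt Hb hl2)).
      * apply stepL_KK. pose proof H1 as H1'. apply stepL_KK in H1.
        destruct H1 as [H1|[s [hs hl]]]; destruct H2 as [H2|[t [ht hl2]]].
        -- left; eapply le_trans; eauto.
        -- right. exists t; split; auto.
           destruct (H_LP _ HH _ _ hl2) as [Pr Pt].
           assert (Ps : sP s0 (K s0 sg)) by exact (H_down _ HH _ _ H1' Pr).
           assert (Hsr : sL s0 (K s0 sg) (K s0 rg)) by (apply (H_comp _ HH); auto).
           exact (Gt _ _ _ Ps Pr Pt Hsr hl2).
        -- right. destruct (normal_SPO _ _ _ H2 hs) as [t [ht hl2]].
           exists t; split; auto.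
           destruct (H_LP _ HH _ _ hl) as [Px Ps]. destruct (H_LP _ HH _ _ hl2) as [_ Pt].
           exact (Gt _ _ _ Px Ps Pt hl hl2).
        -- right. exists t; split; auto.
           destruct (H_LP _ HH _ _ hl) as [Px Ps]. destruct (H_LP _ HH _ _ hl2) as [Pr Pt].
           pose proof (L0_supp_below _ _ hs Pr) as Hb.
           exact (Gt _ _ _ Px Ps Pt hl (Gt _ _ _ Ps Pr Pt Hb hl2)).
  -
    intros a b Pa Pb H.
    destruct Pa as [[x ->]|[sg ->]]; destruct Pb as [[y ->]|[tg ->]].
    + apply stepL_ii, E2, H.
    + apply E3, fin_le_one in H. destruct H as [u [hu hl]].
      apply supp_nat in hu. destruct hu as [t [ht <-]].
      apply stepL_iK. exists t; split; auto.
      assert (Px : sP s0 (iota x)) by exact (H_ip _ HH _ x (jS_P _ t)).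
      apply Gl; auto. apply jS_P.
    + exfalso; eapply E4; eauto.
    + apply E5 in H. apply stepL_KK. destruct H as [H|H].
      * left. apply W_map_qe in H. exact H.
      * right. apply fin_le_one in H. destruct H as [u [hu hl]].
        apply supp_nat in hu. destruct hu as [t [ht <-]].
        exists t; split; auto.
        assert (Ps : sP s0 (K s0 sg)).
        { eapply (H_downZ _ HH); [apply stepP_K|exact hl|apply jS_P]. }
        apply Gl; auto. apply jS_P.
Qed.

Definition incl (a : SPO s0) : SPO (step s0) := exist _ (jS s0 a) (H_mono _ HH _ (jS_P _ a)).

Lemma incl_emb : embedding incl.
Proof.
  intros a b. rewrite (SPO_le _ good1), (SPO_le _ (H_good _ HH)).
  apply (H_comp _ HH); apply jS_P.
Qed.
Definition incl_qe : quasi_emb incl := emb_qe incl_emb.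

Lemma K_shift sg : K (step s0) (W_map incl_qe sg) = K s0 sg.
Proof.
  unfold K. f_equal. symmetry. apply (W_comp W incl_qe (jS_qe _) (jS_qe s0)). reflexivity.
Qed.

Lemma K_shift_inv sg' sg : K (step s0) sg' = K s0 sg -> sg' = W_map incl_qe sg.
Proof. intros e. rewrite <- K_shift in e. apply K_inj in e. exact e. Qed.

Lemma lift_rep (sg' : W (SPO (step s0))) :
  (forall a, In a (supp sg') -> sP s0 (jS _ a)) -> exists sg, sg' = W_map incl_qe sg.
Proof.
  intros H. destruct (proj2 (supp_rng incl_qe incl_emb sg')) as [sg e].
  - intros y hy. exists (exist _ (jS _ y) (H y hy)). destruct y as [y py].
    unfold incl; simpl. f_equal. apply proof_irrelevance.
  - exists sg; auto.
Qed.

Lemma R3_equiv a (tg : W (SPO s0)) : stepP s0 a ->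
  ((exists t', In t' (supp (W_map incl_qe tg)) /\ sL (step s0) a (jS _ t')) <->
   (exists t, In t (supp tg) /\ sL s0 a (jS s0 t))).
Proof.
  intros Pa. split.
  - intros [t' [ht' hl]]. apply supp_nat in ht'. destruct ht' as [t [ht <-]].
    exists t; split; auto.
    assert (P0a : sP s0 a) by exact (H_down _ HH _ _ hl (jS_P _ t)).
    apply (H_comp _ HH); auto. apply jS_P.
  - intros [t [ht hl]]. exists (incl t). split.
    + apply supp_nat. eauto.
    + apply LtoL1. exact hl.
Qed.

Lemma H_comp1 a b : stepP s0 a -> stepP s0 b -> (stepL (step s0) a b <-> stepL s0 a b).
Proof.
  intros Pa Pb.
  destruct Pa as [[x ->]|[sg ->]]; destruct Pb as [[y ->]|[tg ->]].
  - rewrite !stepL_ii. tauto.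
  - rewrite <- (K_shift tg) at 1. rewrite stepL_iK, stepL_iK. apply R3_equiv, stepP_iota.
  - split; intros H; apply stepL_to_iota in H; destruct H as [x' e];
      [rewrite <- K_shift in e|]; exfalso; eapply K_iota; eauto.
  - rewrite <- (K_shift tg) at 1. rewrite <- (K_shift sg) at 1.
    rewrite stepL_KK, stepL_KK. rewrite (K_shift sg).
    rewrite (W_map_emb incl_qe incl_emb sg tg).
    rewrite (R3_equiv _ _ (stepP_K _ _)). tauto.
Qed.

Lemma normal_SPO1 (sg tg : W (SPO (step s0))) s : le sg tg -> In s (supp sg) ->
  exists t, In t (supp tg) /\ stepL s0 (jS _ s) (jS _ t).
Proof.
  intros H Hin. destruct (hW _ _ _ H s Hin) as [t [ht hl]]. exists t; split; auto.
  apply (SPO_le _ good1); auto.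
Qed.

Lemma H_down1 a b : stepL (step s0) a b -> stepP s0 b -> stepP s0 a.
Proof.
  intros H Pb. destruct (stepL_P _ _ _ H) as [Pa _].
  destruct Pa as [[x ->]|[sg' ->]]; [apply stepP_iota|].
  destruct Pb as [[y ->]|[tg ->]].
  { apply stepL_to_iota in H. destruct H as [x e]. exfalso; eapply K_iota; eauto. }
  rewrite <- (K_shift tg) in H. apply stepL_KK in H. destruct H as [H|[t [ht hl]]].
  - destruct (lift_rep sg') as [sg0 e].
    + intros c Ha. destruct (normal_SPO1 _ _ _ H Ha) as [t' [ht' hl]].
      apply supp_nat in ht'. destruct ht' as [t [ht <-]].
      exact (H_down _ HH _ _ hl (jS_P _ t)).
    + subst sg'. rewrite K_shift. apply stepP_K.
  - exact (proj1 (stepL_P _ _ _ hl)).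
Qed.

Lemma H_downZ1 : forall a b, stepP (step s0) a -> le a b -> stepP s0 b -> stepP s0 a.
Proof.
  destruct HK as [E1 [E2 [E3 [E4 E5]]]].
  assert (forall k a b, h b < k -> stepP (step s0) a -> le a b -> stepP s0 b -> stepP s0 a);
    [|intros a b; eauto].
  induction k as [|k IH]; intros a b Hk Pa H Pb; [lia|].
  destruct Pa as [[x ->]|[sg' ->]]; [apply stepP_iota|].
  destruct Pb as [[y ->]|[tg ->]]; [exfalso; eapply E4; eauto|].
  unfold K at 1 2 in H. apply E5 in H. destruct H as [H|H].
  - destruct (lift_rep sg') as [sg0 e].
    + intros c Ha.
      assert (Ha' : In (jS _ c) (supp (W_map (jS_qe _) sg'))) by (apply supp_nat; eauto).
      destruct (hW _ _ _ H _ Ha') as [u [hu hl]].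
      apply supp_nat in hu. destruct hu as [t [ht <-]].
      exact (H_downZ _ HH _ _ (jS_P _ c) hl (jS_P _ t)).
    + subst sg'. rewrite K_shift. apply stepP_K.
  - apply fin_le_one in H. destruct H as [u [hu hl]].
    pose proof (hh _ _ hu) as Hu.
    apply supp_nat in hu. destruct hu as [t [ht <-]].
    apply (IH (K (step s0) sg') (jS _ t)); auto.
    + unfold K in Hk. lia.
    + apply stepP_K.
    + apply (H_mono _ HH), jS_P.
Qed.

Lemma Hyp_step : Hyp (step s0).
Proof.
  constructor.
  - exact good1.
  - intros z [[x ->]|[sg ->]]; [apply stepP_iota|]. rewrite <- K_shift. apply stepP_K.
  - exact H_comp1.
  - exact H_down1.
  - exact H_downZ1.
  - exact (stepL_P s0).
  - intros; apply stepP_iota.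
  - intros x y _ _ H. apply stepL_ii, H.
Qed.
End StepHyp.

Lemma Hyp0 : Hyp (stg 0).
Proof.
  constructor; simpl; try tauto.
  unfold good; simpl; tauto.
Qed.

Lemma Hyp_all n : Hyp (stg n).
Proof. induction n; [exact Hyp0|exact (Hyp_step _ IHn)]. Qed.
Lemma P_mono n m z : n <= m -> sP (stg n) z -> sP (stg m) z.
Proof.
  intros Hle; induction Hle; auto. intros H. apply (H_mono _ (Hyp_all m)). auto.
Qed.

Lemma L_compat n m a b : n <= m -> sP (stg n) a -> sP (stg n) b -> (sL (stg m) a b <-> sL (stg n) a b).
Proof.
  intros Hle Pa Pb; induction Hle; [tauto|].
  rewrite <- IHHle. apply (H_comp _ (Hyp_all m)); apply (P_mono n); auto.
Qed.

Definition Pstar (z : Z) : Prop := exists n, sP (stg n) z.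
Definition Lstar (a b : Z) : Prop := exists n, sL (stg n) a b.

Lemma Lstar_iff n a b : sP (stg n) a -> sP (stg n) b -> (Lstar a b <-> sL (stg n) a b).
Proof.
  intros Pa Pb. split; [|intros H; exists n; auto].
  intros [m H]. destruct (H_LP _ (Hyp_all m) _ _ H) as [Pa' Pb'].
  apply (L_compat n (max n m)); auto; [lia|].
  apply (L_compat m (max n m)); auto. lia.
Qed.

Lemma Pstar_common a b : Pstar a -> Pstar b -> exists n, sP (stg n) a /\ sP (stg n) b.
Proof.
  intros [n Ha] [m Hb]. exists (max n m). split; [apply (P_mono n)|apply (P_mono m)]; auto; lia.
Qed.

Definition ZS : PO.
Proof.
  refine (@MkPO {z : Z | Pstar z} (fun a b => Lstar (proj1_sig a) (proj1_sig b)) _ _ _).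
  - intros [a [n Pa]]; simpl. exists n. destruct (H_good _ (Hyp_all n)) as [Gr _]. auto.
  - intros [a pa] [b pb] h1 h2; simpl in *.
    destruct (Pstar_common _ _ pa pb) as [n [Pa Pb]].
    rewrite (Lstar_iff n) in h1, h2; auto.
    destruct (H_good _ (Hyp_all n)) as [_ [Ga _]].
    assert (a = b) by auto. subst; f_equal; apply proof_irrelevance.
  - intros [a pa] [b pb] [c pc] h1 h2; simpl in *.
    destruct (Pstar_common _ _ pa pb) as [n [Pa Pb]].
    destruct pc as [m Pc].
    set (k := max n m).
    assert (Pa' : sP (stg k) a) by (apply (P_mono n); auto; lia).
    assert (Pb' : sP (stg k) b) by (apply (P_mono n); auto; lia).
    assert (Pc' : sP (stg k) c) by (apply (P_mono m); auto; lia).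
    rewrite (Lstar_iff k) in h1, h2 |- *; auto.
    destruct (H_good _ (Hyp_all k)) as [_ [_ [Gt _]]]. eauto.
Defined.

Definition jstar : ZS -> Z := fun a => proj1_sig a.
Lemma jstar_qe : quasi_emb jstar.
Proof.
  intros [a pa] [b pb] H; simpl in *.
  destruct (Pstar_common _ _ pa pb) as [n [Pa Pb]].
  exists n. destruct (H_good _ (Hyp_all n)) as [_ [_ [_ Gl]]]. auto.
Qed.

Definition eN (N : nat) (a : SPO (stg N)) : ZS := exist _ (jS _ a) (ex_intro _ N (jS_P _ a)).
Lemma eN_emb N : embedding (eN N).
Proof.
  intros a b. rewrite (SPO_le _ (H_good _ (Hyp_all N))).
  apply Lstar_iff; apply jS_P.
Qed.
Definition eN_qe N : quasi_emb (eN N) := emb_qe (eN_emb N).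

Lemma list_common (l : list ZS) : exists N, forall a, In a l -> sP (stg N) (jstar a).
Proof.
  induction l as [|a l [N HN]].
  - exists 0; intros a [].
  - destruct (proj2_sig a) as [n Pa].
    exists (max n N). intros b [<-|Hb].
    + apply (P_mono n); auto; lia.
    + apply (P_mono N); auto; lia.
Qed.

Lemma rep_N N (sg : W ZS) : (forall a, In a (supp sg) -> sP (stg N) (jstar a)) ->
  exists sg0, sg = W_map (eN_qe N) sg0.
Proof.
  intros H. destruct (proj2 (supp_rng (eN_qe N) (eN_emb N) sg)) as [sg0 e].
  - intros y hy. exists (exist _ (jstar y) (H y hy)). destruct y as [y py].
    unfold eN; simpl. f_equal. apply proof_irrelevance.
  - exists sg0; auto.
Qed.

Lemma rep2 (sg tg : W ZS) : exists N sg0 tg0, sg = W_map (eN_qe N) sg0 /\ tg = W_map (eN_qe N) tg0.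
Proof.
  destruct (list_common (supp sg ++ supp tg)) as [N HN].
  destruct (rep_N N sg) as [sg0 e1]; [intros a Ha; apply HN, in_or_app; auto|].
  destruct (rep_N N tg) as [tg0 e2]; [intros a Ha; apply HN, in_or_app; auto|].
  exists N, sg0, tg0; auto.
Qed.

Lemma Kstar_eq N (sg0 : W (SPO (stg N))) : kappa (W_map jstar_qe (W_map (eN_qe N) sg0)) = K (stg N) sg0.
Proof.
  unfold K. f_equal. symmetry. apply (W_comp W (eN_qe N) jstar_qe (jS_qe _)). reflexivity.
Qed.

Lemma Pstar_kappa (sg : W ZS) : Pstar (kappa (W_map jstar_qe sg)).
Proof.
  destruct (rep2 sg sg) as [N [sg0 [tg0 [e _]]]]. subst sg.
  rewrite Kstar_eq. exists (S N). apply stepP_K.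
Qed.

Definition iS (x : X) : ZS := exist _ (iota x) (ex_intro _ 1 (stepP_iota _ x)).
Definition kS (sg : W ZS) : ZS := exist _ (kappa (W_map jstar_qe sg)) (Pstar_kappa sg).

Lemma L_to_iota n a y : sL (stg n) a (iota y) -> exists x, a = iota x.
Proof. destruct n as [|n]; [intros []|]. apply stepL_to_iota. Qed.

Lemma L_iK N x tg : sL (stg (S N)) (iota x) (K (stg N) tg) <->
  exists t, In t (supp tg) /\ sL (stg N) (iota x) (jS _ t).
Proof. exact (stepL_iK (stg N) x tg). Qed.
Lemma L_KK N sg tg : sL (stg (S N)) (K (stg N) sg) (K (stg N) tg) <->
  le sg tg \/ exists t, In t (supp tg) /\ sL (stg N) (K (stg N) sg) (jS _ t).
Proof. exact (stepL_KK (stg N) sg tg). Qed.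

Lemma KFP_ZS : is_KFP W X ZS iS kS.
Proof.
  destruct HK as [E1 [E2 [E3 [E4 E5]]]].
  split; [|split; [|split; [|split]]].
  - intros x s e. apply (f_equal (@proj1_sig _ _)) in e. simpl in e. eapply E1; eauto.
  - intros x y [[|n] H]; [destruct H|]. apply stepL_ii in H; exact H.
  - intros x t. destruct (rep2 t t) as [N [t0 [t1 [e _]]]]. subst t.
    change (Lstar (iota x) (kappa (W_map jstar_qe (W_map (eN_qe N) t0))) <->
            fin_le [iS x] (supp (W_map (eN_qe N) t0))).
    rewrite Kstar_eq, fin_le_one.
    rewrite (Lstar_iff (S N)); [|apply stepP_iota|apply stepP_K].
    rewrite (L_iK N).
    split.
    + intros [u [hu hl]]. exists (eN N u). split; [apply supp_nat; eauto|].
      change (Lstar (iota x) (jS _ u)). exists N; auto.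
    + intros [y [hy hl]]. apply supp_nat in hy. destruct hy as [u [hu <-]].
      exists u; split; auto.
      change (Lstar (iota x) (jS _ u)) in hl.
      rewrite (Lstar_iff N) in hl; auto; [|apply jS_P].
      exact (H_ip _ (Hyp_all N) _ x (jS_P _ u)).
  - intros s y [n H]. simpl in H. apply L_to_iota in H. destruct H as [x e].
    eapply E1; symmetry; eauto.
  - intros s t. destruct (rep2 s t) as [N [s0 [t0 [-> ->]]]].
    change (Lstar (kappa (W_map jstar_qe (W_map (eN_qe N) s0))) (kappa (W_map jstar_qe (W_map (eN_qe N) t0))) <->
            le (W_map (eN_qe N) s0) (W_map (eN_qe N) t0) \/
            fin_le [kS (W_map (eN_qe N) s0)] (supp (W_map (eN_qe N) t0))).
    rewrite fin_le_one, (W_map_emb (eN_qe N) (eN_emb N) s0 t0).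
    change (Lstar (kappa (W_map jstar_qe (W_map (eN_qe N) s0))) (kappa (W_map jstar_qe (W_map (eN_qe N) t0))) <->
            le s0 t0 \/ exists y, In y (supp (W_map (eN_qe N) t0)) /\
               Lstar (kappa (W_map jstar_qe (W_map (eN_qe N) s0))) (jstar y)).
    rewrite !Kstar_eq.
    rewrite (Lstar_iff (S N)); [|apply stepP_K|apply stepP_K].
    rewrite (L_KK N).
    assert (EQ : (exists t, In t (supp t0) /\ sL (stg N) (K (stg N) s0) (jS _ t)) <->
                 (exists y, In y (supp (W_map (eN_qe N) t0)) /\ Lstar (K (stg N) s0) (jstar y))).
    { split.
      - intros [u [hu hl]]. exists (eN N u). split; [apply supp_nat; eauto|].
        exists N; exact hl.
      - intros [y [hy hl]]. apply supp_nat in hy. destruct hy as [u [hu <-]].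
        exists u; split; auto.
        change (Lstar (K (stg N) s0) (jS _ u)) in hl.
        assert (Pu : sP (stg (S N)) (jS _ u)) by (apply (H_mono _ (Hyp_all N)), jS_P).
        rewrite (Lstar_iff (S N)) in hl; [|apply stepP_K|exact Pu].
        assert (PK : sP (stg N) (K (stg N) s0)) by exact (H_down _ (Hyp_all N) _ _ hl (jS_P _ u)).
        apply (H_comp _ (Hyp_all N)); auto. apply jS_P. }
    rewrite EQ. tauto.
Qed.

Lemma iS_mono x y : le x y -> le (iS x) (iS y).
Proof. intros H. exists 1. apply stepL_ii. exact H. Qed.

End Part2C.

Lemma part2 (W : PO_dilator) (hW : normal W) (X Z : PO) (iota : X -> Z) (kappa : W Z -> Z) :
  is_KFP W X Z iota kappa -> is_initial_KFP W X Z iota kappa ->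
  (forall z : Z, (exists x, iota x = z) \/ (exists s, kappa s = z)) /\
  (forall x y : X, le x y -> le (iota x) (iota y)) /\
  (exists h : Z -> nat, forall (s : Z) (sg : W Z), In s (supp sg) -> h s < h (kappa sg)).
Proof.
  intros HK HI.
  pose proof (p2_kappa_inj W X Z iota kappa hW HK HI) as kinj.
  pose proof (p2_height W X Z iota kappa hW HK HI) as hh.
  set (h := hG W X Z iota kappa HK HI) in hh.
  split; [exact (p2_surj W X Z iota kappa HK HI)|].
  split; [|exists h; exact hh].
  intros x y Hxy.
  destruct (HI _ _ _ (KFP_ZS W X Z iota kappa hW HK kinj h hh)) as [f [hf [Hi _]]].
  apply hf. rewrite !Hi. apply iS_mono. exact Hxy.
Qed.

Theorem theorem3p5 (W : PO_dilator) (hW : normal W) (X Z : PO)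
  (iota : X -> Z) (kappa : W Z -> Z) :
  is_KFP W X Z iota kappa ->
  ( ( (forall z : Z, (exists x, iota x = z) \/ (exists s, kappa s = z)) /\
      (forall x y : X, le x y -> le (iota x) (iota y)) /\
      (exists h : Z -> nat, forall (s : Z) (sg : W Z),
          In s (supp sg) -> h s < h (kappa sg)) )
    <-> is_initial_KFP W X Z iota kappa ).
Proof.
  intros HK. split.
  - intros [surj [mono hex]]. exact (part1 W X Z iota kappa HK surj mono hex).
  - intros HI. exact (part2 W hW X Z iota kappa HK HI).
Qed.
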